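(* Let $G$ be a connected graph on $n$ vertices and let $k$ be an integer with $2\le k\le \operatorname{diam}(G)$. Then \[ b(G^k)\le \left\lceil \sqrt{\frac{4(k-1)}{k^2}\,n}\;\right\rceil. \]
   Context: Graphs are finite, simple, undirected. $G^k$ is the graph on $V(G)$ in which distinct $u,v$ are adjacent iff $d_G(u,v)\le k$. Graph burning: in each round $i$ a vertex (source) is chosen and burned, and simultaneously every unburned neighbour of a vertex burned by the end of round $i-1$ becomes burned; burned vertices stay burned. The burning number $b(G)$ is the minimum number of rounds needed to burn all vertices. *)

(* Defs.v *)
From HB Require Import structures.
From mathcomp Require Import all_boot all_order all_algebra.
From mathcomp Require Import reals.
Set Implicit Arguments. Unset Strict Implicit. Unset Printing Implicit Defensive.
Import Order.TTheory GRing.Theory Num.Theory.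

Definition simple_graph (T : finType) (e : rel T) : Prop :=
  symmetric e /\ irreflexive e.

Definition connected_graph (T : finType) (e : rel T) : Prop :=
  forall u v : T, connect e u v.

Fixpoint ball (T : finType) (e : rel T) (k : nat) (u : T) : {set T} :=
  match k with
  | 0 => [set u]
  | k'.+1 => ball e k' u :|: [set y | [exists x in ball e k' u, e x y]]
  end.

(* Graph distance d_G(u,v): the least k with v in ball e k u
   (for a connected graph on #|T| vertices this is < #|T|). *)
Definition dist (T : finType) (e : rel T) (u v : T) : nat :=
  find (fun k => v \in ball e k u) (iota 0 #|T|.+1).

Definition diam (T : finType) (e : rel T) : nat :=
  \max_(u : T) \max_(v : T) dist e u v.

Definition graph_pow (T : finType) (e : rel T) (k : nat) : rel T :=
  fun u v => (u != v) && (v \in ball e k u).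

Definition burn_step (T : finType) (e : rel T) (B : {set T}) (x : T) : {set T} :=
  x |: (B :|: [set y | [exists z in B, e z y]]).

Definition burned (T : finType) (e : rel T) (s : seq T) : {set T} :=
  foldl (burn_step e) set0 s.

(* Burning number: least m such that some m rounds burn every vertex
   (m = #|T| always suffices, so the search range is complete). *)
Definition burning_number (T : finType) (e : rel T) : nat :=
  find (fun m => [exists s : m.-tuple T, burned e s == [set: T]])
       (iota 0 #|T|.+1).

(* Main.v *)
Require Import Defs.
From HB Require Import structures.
From mathcomp Require Import all_boot all_order all_algebra.
From mathcomp Require Import reals.
From Stdlib Require ZArith.
From Stdlib Require Import Ring ZArithRing Zify.
From mathcomp Require Import zify.

Lemma id1 k m : 4 * k.+1 * ((k.+2) * (m.+2) * m.+1 + 2 * m.+2) = 2 * (k.+2 ^ 2 * m.+2 ^ 2) + 2 * m.+2 * k * (k.+2 * m + 2).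
Proof. zify; ring. Qed.

Import Order.TTheory GRing.Theory Num.Theory.

Set Implicit Arguments. Unset Strict Implicit.

Section Balls.
Variables (T : finType) (e : rel T).

Lemma ballS_in j u x y : x \in ball e j u -> e x y -> y \in ball e j.+1 u.
Proof.
move=> Hx Hxy; rewrite /= inE; apply/orP; right; rewrite inE.
by apply/existsP; exists x; rewrite Hx Hxy.
Qed.

Lemma ball_sub1 j u : ball e j u \subset ball e j.+1 u.
Proof. exact: subsetUl. Qed.

Lemma ball_mono i j u : i <= j -> ball e i u \subset ball e j u.
Proof.
move=> /subnKC <-; elim: (j - i) => [|d IH]; first by rewrite addn0.
by apply: subset_trans IH _; rewrite addnS; apply: ball_sub1.
Qed.

Lemma ball_caseS j u y : y \in ball e j.+1 u ->
  y \in ball e j u \/ exists2 x, x \in ball e j u & e x y.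
Proof.
rewrite /= inE => /orP[H|]; first by left.
by rewrite inE => /existsP[x /andP[Hx Hxy]]; right; exists x.
Qed.

Lemma ball_split a b x y : y \in ball e (a + b) x ->
  exists2 z, z \in ball e a x & y \in ball e b z.
Proof.
elim: b y => [|b IH] y; first by rewrite addn0 => H; exists y => //; rewrite /= inE.
rewrite addnS => /ball_caseS [H|[w Hw Hwy]].
  by have [z Hz Hyz] := IH _ H; exists z => //; apply: (subsetP (ball_sub1 _ _)).
by have [z Hz Hwz] := IH _ Hw; exists z => //; apply: ballS_in Hwz Hwy.
Qed.

End Balls.
Section Balls2.
Variables (T : finType) (e : rel T).
Lemma pow_ball k j x : ball e (k * j) x \subset ball (graph_pow e k) j x.
Proof.
elim: j => [|j IH]; first by rewrite muln0.
apply/subsetP => y; rewrite mulnS addnC => /ball_split [z Hz Hy].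
have Hz' := subsetP IH _ Hz.
case: (eqVneq z y) => [<-|Hne]; first exact: (subsetP (ball_sub1 _ _ _) _ Hz').
by apply: ballS_in Hz' _; rewrite /graph_pow Hne.
Qed.

Lemma burn_step1 (B : {set T}) j y (x : T) : ball e j y \subset B -> ball e j.+1 y \subset burn_step e B x.
Proof.
move=> HB; apply/subsetP => z /ball_caseS [H|[w Hw Hwz]].
  by rewrite /burn_step !inE (subsetP HB _ H) orbT.
rewrite /burn_step !inE; apply/orP; right; apply/orP; right.
by apply/existsP; exists w; rewrite (subsetP HB _ Hw) Hwz.
Qed.

Lemma burn_grow (s : seq T) (B : {set T}) j y : ball e j y \subset B ->
  ball e (j + size s) y \subset foldl (burn_step e) B s.
Proof.
elim: s B j => [|x s IH] B j H; first by rewrite addn0.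
by rewrite /= addnS -addSn; apply: IH; apply: burn_step1.
Qed.

Fixpoint covers (f : nat -> nat) (s : seq T) : {set T} :=
  if s is x :: s' then ball e (f (size s')) x :|: covers f s' else set0.

Lemma covers_burn (s : seq T) (B : {set T}) : covers id s \subset foldl (burn_step e) B s.
Proof.
elim: s B => [|x s IH] B /=; first exact: sub0set.
rewrite subUset IH andbT.
have -> : size s = 0 + size s by [].
apply: burn_grow; apply/subsetP => z; rewrite /= inE => /eqP ->.
by rewrite /burn_step !inE eqxx.
Qed.

End Balls2.

Section Tree.
Variables (T : finType) (e : rel T) (rho : T).
Hypothesis conn : forall x, exists j, x \in ball e j rho.

Definition hh x := ex_minn (conn x).

Lemma hh_in x : x \in ball e (hh x) rho.
Proof. by rewrite /hh; case: ex_minnP. Qed.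

Lemma hh_min x j : x \in ball e j rho -> hh x <= j.
Proof. by rewrite /hh; case: ex_minnP => n _ Hm /Hm. Qed.

Lemma hh0 x : hh x = 0 -> x = rho.
Proof. by move=> H; have := hh_in x; rewrite H /= inE => /eqP. Qed.

Definition pp x := odflt x [pick y | (hh y == (hh x).-1) && e y x].

Lemma pp_spec x : 0 < hh x -> hh (pp x) = (hh x).-1 /\ e (pp x) x.
Proof.
move=> Hx; rewrite /pp; case: pickP => [y /andP[/eqP H1 H2] | H] //=.
exfalso; have Hmin := hh_min (x := x); have Hin := hh_in x.
case Ehx: (hh x) Hx Hin => [//|j] _ /ball_caseS [Hb|[y Hy Hyx]].
  by have := Hmin _ Hb; rewrite Ehx ltnn.
have Hyj := hh_min Hy.
have : hh y = j.
  apply/eqP; rewrite eqn_leq Hyj /=; rewrite leqNgt; apply/negP => Hlt.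
  have Hb : x \in ball e (hh y).+1 rho by apply: ballS_in (hh_in y) Hyx.
  have := Hmin _ (subsetP (ball_mono e rho Hlt) _ Hb); by rewrite Ehx ltnn.
by move=> Hyh; have := H y; rewrite Hyh Ehx /= eqxx Hyx.
Qed.

Lemma hh_iter t x : t <= hh x -> hh (iter t pp x) = hh x - t.
Proof.
elim: t => [|t IH] Ht; first by rewrite subn0.
rewrite iterS; have H := IH (ltnW Ht).
have Hp : 0 < hh (iter t pp x) by rewrite H; lia.
have [-> _] := pp_spec Hp.
by rewrite H; lia.
Qed.

Lemma ball_iter t x : t <= hh x -> x \in ball e t (iter t pp x).
Proof.
elim: t x => [|t IH] x Ht; first by rewrite /= inE.
rewrite iterSr; have Hp : 0 < hh x by lia.
have [H1 H2] := pp_spec Hp.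
apply: ballS_in H2; apply: IH; lia.
Qed.

Definition desc v := [set x | (hh v <= hh x) && (iter (hh x - hh v) pp x == v)].

Lemma desc_ball v x : x \in desc v -> x \in ball e (hh x - hh v) v.
Proof.
rewrite inE => /andP[_ /eqP H]; rewrite -{2}H; apply: ball_iter; lia.
Qed.

Lemma desc_p v x : 0 < hh x -> pp x \in desc v -> x \in desc v.
Proof.
move=> Hx; have [H1 _] := pp_spec Hx; rewrite !inE H1 => /andP[Hle /eqP Hi].
have -> : hh x - hh v = (hh x).-1 - hh v + 1 by lia.
by rewrite addn1 iterSr Hi eqxx andbT; lia.
Qed.

Definition closedU (U : {set T}) := forall x, x \in U -> 0 < hh x -> pp x \in U.

Lemma cover_tree k m (U : {set T}) : closedU U -> #|U| <= \sum_(0 <= j < m) (k * j).+1 ->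
  exists s : seq T, (size s == m) && (U \subset covers e (muln k) s).
Proof.
elim: m U => [|m IH] U HU.
  rewrite big_geq // leqn0 cards_eq0 => /eqP ->.
  by exists [::]; rewrite sub0set.
rewrite big_nat_recr //= => Hcard.
case: (boolP [forall x in U, hh x <= k * m]) => [/forall_inP Hall | Hn].
  exists (rho :: nseq m rho); rewrite /= size_nseq eqxx /=.
  apply/subsetP => x Hx; rewrite inE; apply/orP; left.
  exact: (subsetP (ball_mono e rho (Hall x Hx)) _ (hh_in x)).
have [u0 Hu0 Hu0h] : exists2 u0, u0 \in U & k * m < hh u0.
  move: Hn; rewrite negb_forall_in => /exists_inP [x Hx Hxh].
  by exists x => //; rewrite ltnNge.
case: (@arg_maxnP T u0 (mem U) hh Hu0) => u Hu umax.
have Hr : k * m < hh u by apply: leq_trans Hu0h (umax _ Hu0).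
set r := k * m in Hr Hcard IH *.
set v := iter r pp u.
have Hv : hh v = hh u - r by apply: hh_iter; lia.
have Hiter : forall t, t <= r -> (iter t pp u \in U) && (hh (iter t pp u) == hh u - t).
  elim=> [|t IHt] Ht; first by rewrite /= subn0 eqxx andbT.
  have /andP[HtU /eqP Hth] := IHt (ltnW Ht).
  rewrite iterS; have Hp : 0 < hh (iter t pp u) by rewrite Hth; lia.
  have [H1 _] := pp_spec Hp.
  rewrite HU // H1 Hth; apply/eqP; lia.
pose S := [set iter (val t) pp u | t : 'I_r.+1].
have HS : #|S| = r.+1.
  rewrite card_imset ?card_ord // => t1 t2 Ht; apply: val_inj.
  have /andP[_ /eqP E1] := Hiter _ (ltn_ord t1 : (val t1 <= r)).
  have /andP[_ /eqP E2] := Hiter _ (ltn_ord t2 : (val t2 <= r)).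
  move: E1 E2; rewrite Ht => -> H2.
  have L1 : val t1 < r.+1 := ltn_ord t1; have L2 : val t2 < r.+1 := ltn_ord t2.
  move: (val t1) (val t2) L1 L2 H2 => a b L1 L2 H2; lia.
have HSsub : S \subset U :&: desc v.
  apply/subsetP => y /imsetP [t _ ->]; have Ht : val t <= r := ltn_ord t.
  have /andP[HtU /eqP Hth] := Hiter _ Ht.
  rewrite inE HtU inE Hth Hv; apply/andP; split; first by lia.
  have -> : hh u - val t - (hh u - r) = r - val t by lia.
  rewrite -iterD (subnK Ht) eqxx andbT; lia.
have Hcard2 : r.+1 <= #|U :&: desc v| by rewrite -HS subset_leq_card.
have HU' : closedU (U :\: desc v).
  move=> x; rewrite inE => /andP[Hxd HxU] Hx; rewrite inE HU // andbT.
  by apply/negP => /(desc_p Hx); apply/negP.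
have Hcard3 : #|U :\: desc v| <= \sum_(0 <= j < m) (k * j).+1.
  have := cardsID (desc v) U; move: Hcard Hcard2; clearbody r; lia.
have [s' /andP[/eqP Hs' Hsub]] := IH _ HU' Hcard3.
exists (v :: s'); rewrite /= Hs' eqxx /=.
apply/subsetP => x Hx; rewrite inE.
case: (boolP (x \in desc v)) => Hxd.
  apply/orP; left; apply: (subsetP (ball_mono e v _)) (desc_ball Hxd).
  have := umax _ Hx; lia.
by rewrite (subsetP Hsub) ?orbT // inE Hxd Hx.
Qed.

End Tree.



Lemma sum_closed k m : (\sum_(0 <= j < m) (k * j).+1).*2 + k * m = k * m * m + 2 * m.
Proof.
elim: m => [|m IH]; first by rewrite big_geq // !muln0.
rewrite big_nat_recr //=; move: IH; set S := \sum_(0 <= j < m) _.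
rewrite !mulnS !mulSn. lia.
Qed.



Lemma arith k m n S : 4 * (k - 1) * n <= k ^ 2 * m ^ 2 -> k.+1 <= n -> 2 <= k ->
  S.*2 + k * m = k * m * m + 2 * m -> n <= S.
Proof.
move=> H1 H2 H3 H4.
case: k H1 H2 H3 H4 => [//|[//|k']] H1 H2 _ H4.
have Hm : 2 <= m.
  rewrite leqNgt; apply/negP => Hm.
  have Hn : 4 * k'.+1 * k'.+3 <= 4 * k'.+1 * n by rewrite leq_mul2l H2 orbT.
  move: H1; rewrite subSS subn0.
  case: m Hm {H4} => [|[|//]] _; rewrite ?expnS ?expn0 ?muln0 ?muln1 => H1; nia.
case: m Hm H1 H4 => [//|[//|m']] _ H1 H4.
have E := id1 k' m'.
have HS : S.*2 = k'.+2 * m'.+2 * m'.+1 + 2 * m'.+2.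
  move: H4; rewrite !mulnS !mulSn -!addnA; set a := k'.+2 * m'; set b := a * m'; lia.
have : 4 * k'.+1 * n.*2 <= 4 * k'.+1 * S.*2.
  rewrite HS E; apply: leq_trans (leq_addr _ _).
  move: H1; rewrite subSS subn0 -!mulnA -muln2.
  have E2 : k'.+1 * (n * 2) = (k'.+1 * n) * 2 by rewrite mulnA.
  rewrite E2; set X := k'.+2 * _.
  set Y := k'.+1 * n; lia.
rewrite leq_mul2l leq_double /=; by [].
Qed.

Section Main.
Variables (T : finType) (e : rel T).

Lemma path_ball u (p : seq T) y j : path e y p -> y \in ball e j u ->
  last y p \in ball e (j + size p) u.
Proof.
elim: p y j => [|z p IH] y j /=; first by rewrite addn0.
move=> /andP[Hyz Hp] Hy; rewrite addnS -addSn; apply: IH => //.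
exact: ballS_in Hy Hyz.
Qed.

Lemma conn_ball : connected_graph e -> forall u x, exists j, x \in ball e j u.
Proof.
move=> C u x; case/connectP: (C u x) => p Hp ->; exists (0 + size p).
by apply: path_ball => //; rewrite /= inE.
Qed.

Lemma ball_stable u j : ball e j.+1 u \subset ball e j u ->
  forall i, ball e (j + i) u \subset ball e j u.
Proof.
move=> H; elim=> [|i IH]; first by rewrite addn0.
rewrite addnS; apply/subsetP => y /ball_caseS [Hy|[w Hw Hwy]].
  exact: (subsetP IH).
apply: (subsetP H); exact: ballS_in (subsetP IH _ Hw) Hwy.
Qed.

Lemma ball_card u v (HJ : exists J, v \in ball e J u) j :
  v \notin ball e j u -> j < #|ball e j u|.
Proof.
elim: j => [|j IH] Hv; first by rewrite /= cards1.
have Hv' : v \notin ball e j u.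
  by apply/negP => H; move/negP: Hv; apply; apply: (subsetP (ball_sub1 _ _ _)).
have := IH Hv'.
case: (boolP (ball e j.+1 u \subset ball e j u)) => Hs.
  case: HJ => J HJ; exfalso; move/negP: Hv'; apply.
  apply: (subsetP (ball_stable Hs J)); apply: (subsetP (ball_mono e u (leq_addl j J))) HJ.
have : ball e j u \proper ball e j.+1 u by rewrite properE ball_sub1 Hs.
move/proper_card; lia.
Qed.

Lemma diam_lb k : connected_graph e -> 1 <= k -> k <= diam e -> k < #|T|.
Proof.
move=> C Hk Hd.
case: (boolP [exists u, exists v, k <= dist e u v]) => [/existsP [u /existsP [v Huv]] | Hn].
  have Hf : k.-1 < dist e u v by lia.
  have Hsz : dist e u v <= #|T|.+1 by have := find_size (fun j => v \in ball e j u) (iota 0 #|T|.+1); rewrite size_iota.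
  have := before_find 0 Hf; rewrite nth_iota; last by lia.
  rewrite add0n => Hv; move/negbT: Hv => Hv.
  have := ball_card (conn_ball C u v) Hv.
  have : #|ball e k.-1 u| < #|T|.
    rewrite -cardsT; apply: proper_card; rewrite properT; apply/eqP => E.
    by move: Hv; rewrite E inE.
  lia.
exfalso; have : diam e <= k.-1.
  apply/bigmax_leqP => u _; apply/bigmax_leqP => v _.
  move: Hn; rewrite negb_exists => /forallP /(_ u); rewrite negb_exists => /forallP /(_ v).
  lia.
lia.
Qed.

Lemma bn_le (e' : rel T) m (s : m.-tuple T) : burned e' s == [set: T] ->
  burning_number e' <= m.
Proof.
move=> Hs; rewrite /burning_number; case: (ltnP m #|T|.+1) => Hm.
  rewrite leqNgt; apply/negP => Hf; have := before_find 0 Hf.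
  rewrite nth_iota // add0n => /negbT /negP; apply; apply/existsP; by exists s.
by apply: leq_trans (find_size _ _) _; rewrite size_iota.
Qed.

Lemma covers_pow k (s : seq T) : covers e (muln k) s \subset covers (graph_pow e k) id s.
Proof.
elim: s => [|x s IH] /=; first exact: sub0set.
by apply: setUSS => //; apply: pow_ball.
Qed.

Lemma comb k m : connected_graph e -> 2 <= k -> k <= diam e ->
  4 * (k - 1) * #|T| <= k ^ 2 * m ^ 2 -> burning_number (graph_pow e k) <= m.
Proof.
move=> C Hk Hd H.
have Hn := diam_lb C (ltnW Hk) Hd.
have : 0 < #|T| by lia.
rewrite -cardsT => /card_gt0P [rho _].
have conn := conn_ball C rho.
have HU : closedU conn [set: T] by move=> x _ _; rewrite inE.
have Hcard : #|[set: T]| <= \sum_(0 <= j < m) (k * j).+1.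
  by rewrite cardsT; apply: arith H Hn Hk (sum_closed k m).
have [s /andP[Hs Hsub]] := cover_tree HU Hcard.
apply: (bn_le (s := Tuple Hs)).
rewrite eqEsubset subsetT /=; apply: subset_trans Hsub _.
apply: subset_trans (covers_pow k s) _; exact: covers_burn.
Qed.

End Main.

Unset Implicit Arguments. Set Strict Implicit.

Theorem mainTheorem6 (R : realType) (T : finType) (e : rel T) (k : nat) :
  simple_graph e -> connected_graph e ->
  2 <= k -> k <= diam e ->
  ((burning_number (graph_pow e k))%:Z <=
    Num.ceil (Num.sqrt ((4 * (k - 1))%:R / (k ^ 2)%:R * (#|T|)%:R : R)))%R.
Proof.
move=> _ C Hk Hd.
set X := ((4 * (k - 1))%:R / (k ^ 2)%:R * (#|T|)%:R : R)%R.
have X0 : (0 <= X)%R by rewrite /X mulr_ge0 // divr_ge0.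
have Hge : (0 <= Num.ceil (Num.sqrt X))%R.
  by rewrite ceil_ge0; apply: (lt_le_trans _ (sqrtr_ge0 X)); rewrite ltrN10.
have Hc := ceil_ge (Num.sqrt X).
case: (Num.ceil (Num.sqrt X)) Hc Hge => [m|m] Hc Hge; last by [].
rewrite lez_nat; apply: comb => //.
have Hk2 : (0 < (k ^ 2)%:R :> R)%R by rewrite ltr0n expn_gt0; by case: (k) Hk.
have : (X <= m%:R * m%:R)%R.
  have := ler_pM (sqrtr_ge0 X) (sqrtr_ge0 X) Hc Hc.
  by rewrite -expr2 sqr_sqrtr.
rewrite /X mulrAC ler_pdivrMr // -!natrM ler_nat.
by rewrite mulnn [k ^ 2 * _]mulnC.
Qed.
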